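(* Let $p\in(0,1)$, $q=1-p$, $\alpha\in(0,1)$. Let $\{N(t)\}_{t\in\mathbb{N}_0}$ be the Bernoulli counting process with parameter $p$, i.e. $N(t)=\max\{n\in\mathbb{N}_0:M_0+\dots+M_{n-1}\le t\}$ with $M_0,M_1,\dots$ i.i.d., $P(M_i=k)=pq^{k-1}$, $k\in\mathbb{N}$. Let $\{L_\alpha(t)\}_{t\in\mathbb{N}_0}$ be an independent Sibuya counting process: $L_\alpha(t)=\max\{n\in\mathbb{N}_0:Z_1+\dots+Z_n\le t\}$ with $Z_j$ i.i.d., $P(Z_j=k)=(-1)^{k-1}\binom{\alpha}{k}$, $k\in\mathbb{N}$. Let $\{N_A(t)\}_{t\in\mathbb{N}_0}$ be the fractional Bernoulli counting process of type A: $N_A(t)=\max\{n\in\mathbb{N}_0:J^A_0+\dots+J^A_{n-1}\le t\}$, where $J^A_0,J^A_1,\dots$ are i.i.d. with the discrete Mittag--Leffler distribution of type A, i.e. $J^A\overset{d}{=}\sum_{k=1}^MZ_k$ with $M$ geometric, $P(M=k)=pq^{k-1}$, independent of the i.i.d. Sibuya$(\alpha)$ variables $Z_k$; equivalently $\mathbb{E}u^{J^A}=\dfrac{1-(1-u)^\alpha}{1+\frac{q}{p}(1-u)^\alpha}$. Then for each $t\in\mathbb{N}_0$, $N_A(t)\overset{d}{=}N(L_\alpha(t))$.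
   Context: $\mathbb{N}_0=\mathbb{N}\cup\{0\}$; $\binom{\alpha}{k}=\alpha(\alpha-1)\cdots(\alpha-k+1)/k!$; empty sums are $0$. *)

(* Defs.v *)
(* R : realType. Discrete laws on nat are represented by their
   probability mass functions nat -> R. *)
From mathcomp Require Import all_boot all_order all_algebra.
From mathcomp Require Import reals.
Set Implicit Arguments. Unset Strict Implicit. Unset Printing Implicit Defensive.
Import Order.TTheory GRing.Theory Num.Theory.
Local Open Scope ring_scope.

Section Defs.
Variable R : realType.

Definition gbinom (a : R) (k : nat) : R :=
  (\prod_(i < k) (a - i%:R)) / (k`!)%:R.

Definition geom_pmf (p : R) (k : nat) : R :=
  if k is k'.+1 then p * (1 - p) ^+ k' else 0.

Definition sibuya_pmf (a : R) (k : nat) : R :=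
  if k is k'.+1 then (-1) ^+ k' * gbinom a k else 0.

Definition conv (f g : nat -> R) (k : nat) : R :=
  \sum_(i < k.+1) f i * g (k - i)%N.

Definition dirac0 (k : nat) : R := if k == 0%N then 1 else 0.

Definition convpow (f : nat -> R) (n : nat) : nat -> R := iter n (conv f) dirac0.

(* law of sum_{i=1}^M X_i, M with pmf g independent of i.i.d. X_i with pmf f,
   where f 0 = 0 (so only m <= k contribute to the mass at k) *)
Definition compound (g f : nat -> R) (k : nat) : R :=
  \sum_(m < k.+1) g m * convpow f m k.

(* law of the counting process N(t) = max{n : X_0+...+X_(n-1) <= t} with
   i.i.d. interarrival times of pmf f (supported on N = {1,2,...}):
   P(N(t) = n) = P(S_n <= t < S_n + X_n)
               = sum_(k <= t) P(S_n = k) * P(X_n > t - k). *)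
Definition counting_pmf (f : nat -> R) (t n : nat) : R :=
  \sum_(k < t.+1) convpow f n k * (1 - \sum_(j < (t - k).+1) f j).

Definition mlA_pmf (p a : R) : nat -> R := compound (geom_pmf p) (sibuya_pmf a).

(* law of N(L(t)) with N, L independent: sum_l P(L(t)=l) P(N(l)=n);
   L(t) <= t since Sibuya variables are >= 1, so l ranges over 0..t *)
Definition subordinated_pmf (fN fL : nat -> R) (t n : nat) : R :=
  \sum_(l < t.+1) counting_pmf fL t l * counting_pmf fN l n.

End Defs.

(* Main.v *)
Require Import Defs.
From mathcomp Require Import all_boot all_order all_algebra.
From mathcomp Require Import reals.
From mathcomp Require Import zify ring.
Import Order.TTheory GRing.Theory Num.Theory.
Local Open Scope ring_scope.

Section Helpers.
Variable R : realType.

Lemma big_trunc (n M : nat) (F : nat -> R) : (n <= M)%N ->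
  (forall i, (n <= i)%N -> (i < M)%N -> F i = 0) ->
  \sum_(i < M) F i = \sum_(i < n) F i.
Proof.
move=> hnM H.
rewrite -!(big_mkord xpredT) (big_cat_nat (leq0n n) hnM) /=.
rewrite [X in _ + X = _]big1_seq ?addr0 // => i /andP[_]; rewrite mem_index_iota => /andP[h1 h2]; exact: H.
Qed.

Lemma cp_lemma (a : nat -> R) (A : {poly R}) (t : nat) :
  (forall i, (i <= t)%N -> A`_i = a i) ->
  forall n k, (k <= t)%N -> convpow a n k = (A ^+ n)`_k.
Proof.
move=> hA; elim=> [|n IH] k hk.
  by rewrite /convpow /= expr0 coef1 /dirac0; case: (k == 0%N).
rewrite /convpow iterS -/(convpow a n) /conv exprS coefM.
apply: eq_bigr => [[i hi]] _ /=.
rewrite hA; try lia.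
rewrite IH //; lia.
Qed.

Lemma zero_pow (F : {poly R}) : F`_0 = 0 ->
  forall i k, (k < i)%N -> (F ^+ i)`_k = 0.
Proof.
move=> h0; elim=> [|i IH] k hk //.
rewrite exprS coefM big1 // => [[j hj]] _ /=.
case: j hj => [|j] hj; first by rewrite h0 mul0r.
rewrite IH ?mulr0 //; lia.
Qed.

Lemma comp_coef (P F : {poly R}) k : F`_0 = 0 ->
  (P \Po F)`_k = \sum_(i < k.+1) P`_i * (F ^+ i)`_k.
Proof.
move=> h0; rewrite comp_polyE coef_sum.
under eq_bigr do rewrite coefZ.
rewrite -(big_trunc (size P) (size P + k.+1)%N (fun i => P`_i * (F ^+ i)`_k)); last first.
- by move=> i hi _; rewrite nth_default ?mul0r.
- by rewrite leq_addr.
apply: (big_trunc k.+1 _ (fun i => P`_i * (F ^+ i)`_k)); first lia.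
by move=> i hi _; rewrite zero_pow ?mulr0.
Qed.

Lemma counting_poly (a : nat -> R) (A U : {poly R}) (t n : nat) :
  (forall i, (i <= t)%N -> A`_i = a i) ->
  (forall i, (i <= t)%N -> U`_i = 1) ->
  counting_pmf a t n = (A ^+ n * ((1 - A) * U))`_t.
Proof.
move=> hA hU; rewrite /counting_pmf coefM.
apply: eq_bigr => [[k hk]] _ /=.
rewrite (@cp_lemma _ _ _ hA) //; try lia.
congr (_ * _).
rewrite mulrBl mul1r coefB hU; try lia.
congr (_ - _); rewrite coefM; apply: eq_bigr => [[j hj]] _ /=.
rewrite hA; try lia.
rewrite hU ?mulr1 //; lia.
Qed.

Lemma abel (c D : nat -> R) (T : nat) :
  \sum_(l < T) (c l - c l.+1) * \sum_(j < l.+1) D j =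
  \sum_(l < T) c l * D l - c T * \sum_(j < T) D j.
Proof.
elim: T => [|T IH]; first by rewrite !big_ord0 mulr0 subr0.
rewrite !big_ord_recr /= IH.
ring.
Qed.

Lemma comp_pow (P F : {poly R}) n : (P ^+ n) \Po F = (P \Po F) ^+ n.
Proof.
elim: n => [|n IH]; first by rewrite !expr0 -polyC1 comp_polyC.
by rewrite !exprS comp_polyM IH.
Qed.

End Helpers.

Theorem mainTheorem7 (R : realType) (p alpha : R)
  (hp0 : 0 < p) (hp1 : p < 1) (ha0 : 0 < alpha) (ha1 : alpha < 1) :
  forall t n : nat,
    counting_pmf (mlA_pmf p alpha) t n =
    subordinated_pmf (geom_pmf p) (sibuya_pmf alpha) t n.
Proof.
move=> t n.
set f := sibuya_pmf alpha; set g := geom_pmf p.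
pose F : {poly R} := \poly_(i < t.+1) f i.
pose G : {poly R} := \poly_(i < t.+1) g i.
pose U : {poly R} := \poly_(i < t.+1) 1.
have hF i : (i <= t)%N -> F`_i = f i by move=> hi; rewrite coef_poly ltnS hi.
have hG i : (i <= t)%N -> G`_i = g i by move=> hi; rewrite coef_poly ltnS hi.
have hU i : (i <= t)%N -> U`_i = 1 by move=> hi; rewrite coef_poly ltnS hi.
have hF0 : F`_0 = 0 by rewrite hF.
have hH i : (i <= t)%N -> (G \Po F)`_i = mlA_pmf p alpha i.
  move=> hi; rewrite comp_coef // /mlA_pmf /compound.
  apply: eq_bigr => [[m hm]] _ /=.
  rewrite hG; try lia.
  rewrite (@cp_lemma R _ _ _ hF) //.
rewrite (@counting_poly R _ _ _ _ n hH hU).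
pose D := G ^+ n * (1 - G).
pose c l := (F ^+ l * U)`_t.
have hc l : (t < l)%N -> c l = 0.
  move=> hl; rewrite /c coefM big1 // => [[j hj]] _ /=.
  rewrite zero_pow ?mul0r //; lia.
have -> : (G \Po F) ^+ n * ((1 - (G \Po F)) * U) = (D \Po F) * U.
  by rewrite /D comp_polyM comp_pow comp_polyB -polyC1 comp_polyC mulrA.
have -> : ((D \Po F) * U)`_t = \sum_(i < t.+1) D`_i * c i.
  rewrite comp_polyE mulr_suml coef_sum.
  under eq_bigr do rewrite -scalerAl coefZ.
  rewrite -(big_trunc _ (size D) (size D + t.+1)%N (fun i => D`_i * c i)); last first.
  - by move=> i hi _; rewrite nth_default ?mul0r.
  - by rewrite leq_addr.
  apply: (big_trunc _ t.+1 _ (fun i => D`_i * c i)); first lia.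
  by move=> i hi _; rewrite hc ?mulr0.
rewrite /subordinated_pmf.
have -> : \sum_(l < t.+1) counting_pmf f t l * counting_pmf g l n =
          \sum_(l < t.+1) (c l - c l.+1) * \sum_(j < l.+1) D`_j.
  apply: eq_bigr => [[l hl]] _ /=.
  rewrite (@counting_poly R _ _ _ _ l hF hU) (@counting_poly _ g G U l n); first last.
  - by move=> i hi; apply: hU; lia.
  - by move=> i hi; apply: hG; lia.
  congr (_ * _).
    by rewrite /c mulrBl mul1r mulrBr coefB exprS mulrA [F ^+ l * F]mulrC.
  rewrite mulrA -/D coefM; apply: eq_bigr => [[j hj]] _ /=.
  rewrite hU ?mulr1 //; lia.
by rewrite abel hc // mul0r subr0; under eq_bigr do rewrite mulrC.
Qed.
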